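(* Let $\mathcal D=(X,\mathcal P,\mathcal B)$ be a resolvable divisible design $RGD(r,\lambda,m)$ with $r=\lambda m$, and suppose that any two blocks from different parallel classes contain exactly $\lambda$ common points. Then the incidence graph $\mathrm{Inc}(\mathcal D)$ is a distance-regular bipartite antipodal cover of $K_{r,r}$ with diameter $4$ and antipodal blocks of size $m$.
   Context: A divisible design $GD(k,\lambda,n,kn)$ is a triple $(X,\mathcal P,\mathcal B)$ where $X$ is a set of $kn$ points, $\mathcal P$ is a partition of $X$ into classes of size $n$, and $\mathcal B$ is a collection of $k$-subsets of $X$ (blocks) such that each block meets every class in exactly one point and any two points from different classes are contained in exactly $\lambda$ blocks. It is resolvable, denoted $RGD(k,\lambda,n)$, if its set of blocks is partitioned into parallel classes, i.e. subsets of $\mathcal B$ each of which is a partition of $X$ (this partition is fixed). The incidence graph $\mathrm{Inc}(\mathcal D)$ has vertex set $X\cup\mathcal B$, a point $x$ being adjacent to a block $B$ iff $x\in B$. A graph is antipodal (of diameter $d$) if being at distance $0$ or $d$ is an equivalence relation; its classes are antipodal blocks. The graph is a cover of the quotient graph $\Sigma$ on the antipodal blocks (distinct blocks adjacent iff joined by an edge) if each vertex of a block $B$ has exactly one neighbour in each block adjacent to $B$. *)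

(* Defs.v *)
From mathcomp Require Import all_boot.
Set Implicit Arguments. Unset Strict Implicit. Unset Printing Implicit Defensive.

Section Graphs.
Variables (V : finType) (e : rel V).

Fixpoint ball (n : nat) (x : V) : {set V} :=
  if n is n'.+1 then ball n' x :|: [set z | [exists y in ball n' x, e y z]]
  else [set x].

(* graph distance; equals #|V| (a value never attained by a finite
   distance) when y is unreachable from x *)
Definition dist (x y : V) : nat := find (fun n => y \in ball n x) (iota 0 #|V|).

Definition connected : Prop := forall x y : V, connect e x y.

Definition has_diameter (d : nat) : Prop :=
  [/\ connected, (forall x y, dist x y <= d) & exists x y, dist x y = d].

Definition distance_regular : Prop :=
  connected /\
  exists b a c : nat -> nat, forall x y : V,
    [/\ #|[set z | e y z & dist x z == (dist x y).+1]| = b (dist x y),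
        #|[set z | e y z & dist x z == dist x y]| = a (dist x y)
      & 0 < dist x y -> #|[set z | e y z & dist x z == (dist x y).-1]| = c (dist x y)].

Definition bipartite : Prop := exists col : V -> bool, forall x y, e x y -> col x != col y.

Definition antipodal_rel (d : nat) : rel V := fun x y => (x == y) || (dist x y == d).

Definition antipodal (d : nat) : Prop :=
  has_diameter d /\ equivalence_rel (antipodal_rel d).

Definition antipodal_block (d : nat) (x : V) : {set V} := [set y | antipodal_rel d x y].

Definition antipodal_blocks (d : nat) : {set {set V}} :=
  [set antipodal_block d x | x : V].

Definition quot_adj (C D : {set V}) : bool :=
  (C != D) && [exists x in C, exists y in D, e x y].

Definition is_cover_of_quotient (d : nat) : Prop :=
  forall C D, C \in antipodal_blocks d -> D \in antipodal_blocks d ->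
    quot_adj C D -> forall x, x \in C -> #|[set y in D | e x y]| = 1.

End Graphs.

Definition Krr_side (r : nat) (u : ('I_r + 'I_r)%type) : bool :=
  if u is inl _ then true else false.
Definition Krr_adj (r : nat) : rel ('I_r + 'I_r)%type :=
  fun u v => Krr_side u != Krr_side v.

Definition quotient_iso_Krr (V : finType) (e : rel V) (d r : nat) : Prop :=
  exists f : {set V} -> ('I_r + 'I_r)%type,
    [/\ {in antipodal_blocks e d &, injective f},
        (forall u, exists2 C, C \in antipodal_blocks e d & f C = u)
      & {in antipodal_blocks e d &, forall C D, quot_adj e C D = Krr_adj (f C) (f D)}].

Definition antipodal_cover_of_Krr (V : finType) (e : rel V) (d r : nat) : Prop :=
  [/\ antipodal e d, is_cover_of_quotient e d & quotient_iso_Krr e d r].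

(* points : type P (X = all of P), blocks : type B (an abstract index type,
   so that the block collection may a priori have repetitions), incidence inc *)

Definition inc_graph (P B : finType) (inc : P -> B -> bool) : rel (P + B)%type :=
  fun u v => match u, v with
             | inl x, inr b => inc x b
             | inr b, inl x => inc x b
             | _, _ => false
             end.

Definition is_GD (P B : finType) (inc : P -> B -> bool) (Pcl : {set {set P}})
    (k lam n : nat) : Prop :=
  #|P| = k * n /\
  [/\ partition Pcl [set: P],
      (forall C, C \in Pcl -> #|C| = n),
      (forall b : B, #|[set x | inc x b]| = k),
      (forall (b : B) C, C \in Pcl -> #|[set x in C | inc x b]| = 1)
    & (forall x y : P, pblock Pcl x != pblock Pcl y ->
         #|[set b : B | inc x b && inc y b]| = lam)].

Definition is_resolution (P B : finType) (inc : P -> B -> bool)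
    (Rcl : {set {set B}}) : Prop :=
  partition Rcl [set: B] /\
  forall R, R \in Rcl -> forall x : P, #|[set b in R | inc x b]| = 1.

Definition is_RGD (P B : finType) (inc : P -> B -> bool) (Pcl : {set {set P}})
    (Rcl : {set {set B}}) (k lam n : nat) : Prop :=
  is_GD inc Pcl k lam n /\ is_resolution inc Rcl.

(* Main.v *)
Require Import Defs.
From mathcomp Require Import all_boot.
From mathcomp Require Import zify.
Set Implicit Arguments. Unset Strict Implicit. Unset Printing Implicit Defensive.

Lemma card_setE (T : finType) (p : pred T) : #|[set y | p y]| = \sum_y (p y : nat).
Proof.
rewrite -sum1_card big_mkcond /=; apply: eq_bigr => y _; rewrite inE; by case: (p y).
Qed.

Lemma dcount (T1 T2 : finType) (R : T1 -> T2 -> bool) :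
  \sum_x #|[set y | R x y]| = \sum_y #|[set x | R x y]|.
Proof.
rewrite (eq_bigr _ (fun x _ => card_setE (R x))).
rewrite [RHS](eq_bigr _ (fun y _ => card_setE (R^~ y))).
exact: exchange_big.
Qed.

Lemma card_sumset (T1 T2 : finType) (p : pred (T1 + T2)) :
  #|[set z | p z]| = #|[set x | p (inl x)]| + #|[set y | p (inr y)]|.
Proof. by rewrite !card_setE big_sumType. Qed.

Lemma card_split (T : finType) (p q : pred T) :
  #|[set z | p z]| = #|[set z | p z && q z]| + #|[set z | p z && ~~ q z]|.
Proof.
rewrite !card_setE -big_split /=; apply: eq_bigr => z _; by case: (p z); case: (q z).
Qed.

Lemma card1_eq (T : finType) (A : {set T}) x y :
  #|A| = 1 -> x \in A -> y \in A -> x = y.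
Proof. by move/eqP/cards1P => [z ->]; rewrite !inE => /eqP-> /eqP->. Qed.

Lemma card_pos_ex (T : finType) (A : {set T}) : 0 < #|A| -> exists x, x \in A.
Proof. by rewrite card_gt0 => /set0Pn. Qed.

Lemma bij_ord (T : finType) (A : {set T}) n : 0 < n -> #|A| = n ->
  exists f : T -> 'I_n, {in A &, injective f} /\ (forall i, exists2 x, x \in A & f x = i).
Proof.
move=> n0 HA; have [x0 x0A] : exists x, x \in A by apply: card_pos_ex; rewrite HA.
exists (fun x => cast_ord HA (enum_rank_in x0A x)); split.
  move=> x y xA yA /= /(congr1 (cast_ord (esym HA))); rewrite !cast_ordK => E.
  by rewrite -(enum_rankK_in x0A xA) -(enum_rankK_in x0A yA) E.
move=> i; exists (enum_val (cast_ord (esym HA) i)); first exact: enum_valP.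
by rewrite enum_valK_in; apply: val_inj.
Qed.

Section BallD.
Variables (V : finType) (e : rel V) (x : V) (D : V -> nat).
Hypotheses (H0 : forall y, (D y == 0) = (y == x))
  (H1 : forall y z, e z y -> D y <= (D z).+1)
  (H2 : forall y, 0 < D y -> exists z, e z y && (D z == (D y).-1)).

Lemma ball_D n y : (y \in ball e n x) = (D y <= n).
Proof.
elim: n y => [|n IH] y /=; first by rewrite inE leqn0 H0.
rewrite in_setU IH inE; apply/idP/idP.
  case/orP=> [/leqW//|/existsP [z /andP [zin ezy]]].
  rewrite IH in zin; exact: leq_trans (H1 ezy) _.
rewrite leq_eqVlt ltnS => /orP [/eqP Dy | ->//]; apply/orP; right.
have [z /andP [ezy /eqP Dz]] : exists z, e z y && (D z == (D y).-1) by apply: H2; rewrite Dy.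
apply/existsP; exists z; by rewrite IH Dz Dy /= leqnn ezy.
Qed.

Lemma find_leq k s N : s <= k -> k < s + N -> find (fun n => k <= n) (iota s N) = k - s.
Proof.
elim: N s => [|N IH] s sk kN; first by lia.
rewrite /= ; case: leqP => ks; first by lia.
rewrite IH //; lia.
Qed.

Lemma dist_D y : D y < #|V| -> dist e x y = D y.
Proof.
move=> Dy; rewrite /dist (eq_find (a2 := fun n => D y <= n)); last by move=> n; rewrite ball_D.
by rewrite find_leq // subn0.
Qed.

Lemma ball_connect n y : y \in ball e n x -> connect e x y.
Proof.
elim: n y => [|n IH] y /=; first by rewrite inE => /eqP->.
rewrite in_setU inE => /orP [/IH//|/existsP [z /andP [zin ezy]]].
exact: connect_trans (IH _ zin) (connect1 ezy).
Qed.

Lemma connect_D y : connect e x y.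
Proof. apply: (@ball_connect (D y)); by rewrite ball_D. Qed.
End BallD.

Section Main.
Variables (P B : finType) (inc : P -> B -> bool) (Pcl : {set {set P}}) (Rcl : {set {set B}}) (r lam m : nat).
Hypotheses (Hm : 1 < m) (Hlam : 0 < lam) (Hr : r = lam * m)
 (HP : #|P| = r * m) (HPpart : partition Pcl [set: P]) (HPsize : forall C, C \in Pcl -> #|C| = m)
 (Hbsize : forall b : B, #|[set x | inc x b]| = r)
 (Hmeet : forall (b : B) C, C \in Pcl -> #|[set x in C | inc x b]| = 1)
 (Hlamb : forall x y : P, pblock Pcl x != pblock Pcl y -> #|[set b : B | inc x b && inc y b]| = lam)
 (HRpart : partition Rcl [set: B])
 (Hres : forall R, R \in Rcl -> forall x : P, #|[set b in R | inc x b]| = 1)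
 (Hdual : forall b b' : B, pblock Rcl b != pblock Rcl b' -> #|[set x : P | inc x b && inc x b']| = lam).

Lemma r_gt1 : 1 < r. Proof. rewrite Hr; nia. Qed.

Lemma coverP x : x \in cover Pcl. Proof. by rewrite (cover_partition HPpart) inE. Qed.
Lemma coverR b : b \in cover Rcl. Proof. by rewrite (cover_partition HRpart) inE. Qed.
Lemma pbPin x : pblock Pcl x \in Pcl. Proof. exact: pblock_mem (coverP x). Qed.
Lemma pbRin b : pblock Rcl b \in Rcl. Proof. exact: pblock_mem (coverR b). Qed.
Lemma memPb x : x \in pblock Pcl x. Proof. by rewrite mem_pblock coverP. Qed.
Lemma memRb b : b \in pblock Rcl b. Proof. by rewrite mem_pblock coverR. Qed.
Lemma trP : trivIset Pcl. Proof. exact: partition_trivIset HPpart. Qed.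
Lemma trR : trivIset Rcl. Proof. exact: partition_trivIset HRpart. Qed.
Lemma eqPb x y : (pblock Pcl x == pblock Pcl y) = (y \in pblock Pcl x).
Proof. exact: eq_pblock trP (coverP x). Qed.
Lemma eqRb x y : (pblock Rcl x == pblock Rcl y) = (y \in pblock Rcl x).
Proof. exact: eq_pblock trR (coverR x). Qed.

Lemma one_per_class x y b : inc x b -> inc y b -> pblock Pcl x = pblock Pcl y -> x = y.
Proof.
move=> xb yb E; apply: (card1_eq (Hmeet b (pbPin x))); rewrite !inE ?xb ?yb ?andbT ?memPb //.
by rewrite E memPb.
Qed.

Lemma disj b b' x : inc x b -> inc x b' -> pblock Rcl b = pblock Rcl b' -> b = b'.
Proof.
move=> xb xb' E; apply: (card1_eq (Hres (pbRin b) x)); rewrite !inE ?xb ?xb' ?andbT ?memRb //.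
by rewrite E memRb.
Qed.

Lemma common_block x y : pblock Pcl x != pblock Pcl y -> exists b, inc x b && inc y b.
Proof. move/Hlamb=> H; have [b] : exists b, b \in [set b | inc x b && inc y b] by apply: card_pos_ex; rewrite H.
by rewrite inE; exists b. Qed.

Lemma common_point b b' : pblock Rcl b != pblock Rcl b' -> exists x, inc x b && inc x b'.
Proof. move/Hdual=> H; have [x] : exists x, x \in [set x | inc x b && inc x b'] by apply: card_pos_ex; rewrite H.
by rewrite inE; exists x. Qed.

Lemma block_through x R : R \in Rcl -> exists b, (b \in R) && inc x b.
Proof. move/Hres=> /(_ x) H; have [b] : exists b, b \in [set b in R | inc x b] by apply: card_pos_ex; rewrite H.
by rewrite inE; exists b. Qed.

Lemma pt_in_block b : exists x, inc x b.
Proof. have [x] : exists x, x \in [set x | inc x b] by apply: card_pos_ex; rewrite Hbsize; have := r_gt1; lia.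
by rewrite inE; exists x. Qed.

Lemma others x b : #|[set y | inc y b && (pblock Pcl y != pblock Pcl x)]| = r - 1.
Proof.
have := card_split (fun y => inc y b) (fun y => pblock Pcl y == pblock Pcl x).
rewrite Hbsize.
have -> : #|[set z | inc z b && (pblock Pcl z == pblock Pcl x)]| = 1.
  rewrite -(Hmeet b (pbPin x)); apply: eq_card => z; by rewrite !inE eq_sym eqPb andbC.
lia.
Qed.

Lemma sum_if (T : finType) (c : pred T) n :
  \sum_(x : T) (if c x then n else 0) = #|[set x | c x]| * n.
Proof.
rewrite card_setE big_distrl /=; apply: eq_bigr => x _; by case: (c x); rewrite ?mul1n ?mul0n.
Qed.

Lemma card0_false (T : finType) (p : pred T) : (forall x, p x = false) -> #|[set x | p x]| = 0.
Proof. move=> H; rewrite card_setE big1 // => x _; by rewrite H. Qed.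

Lemma deg x : #|[set b | inc x b]| = r.
Proof.
have cnt := dcount (fun y b => inc x b && inc y b && (pblock Pcl y != pblock Pcl x)).
rewrite (eq_bigr (fun y => if pblock Pcl y != pblock Pcl x then lam else 0)) in cnt; last first.
  move=> y _; case: (boolP (pblock Pcl y != pblock Pcl x)) => H.
    rewrite -(@Hlamb x y); last by rewrite eq_sym.
by apply: eq_card => b; rewrite !inE andbT.
  by apply: card0_false => b; rewrite andbF.
rewrite [in RHS](eq_bigr (fun b => if inc x b then r - 1 else 0)) in cnt; last first.
  move=> b _; case: (boolP (inc x b)) => H.
    by rewrite -(others x b); apply: eq_card => y; rewrite !inE.
  by apply: card0_false => y; done.
rewrite !sum_if in cnt.
have E : #|[set y | pblock Pcl y != pblock Pcl x]| = r * m - m.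
  have := cardsC (pblock Pcl x); rewrite HPsize ?pbPin // HP => H.
  have -> : [set y | pblock Pcl y != pblock Pcl x] = ~: pblock Pcl x.
    by apply/setP => y; rewrite !inE eq_sym eqPb.
  lia.
rewrite E in cnt; have := r_gt1; move: cnt; rewrite Hr; nia.
Qed.

Lemma someP : exists x : P, true.
Proof. have [x _] : exists x, x \in [set: P] by apply: card_pos_ex; rewrite cardsT HP; have := r_gt1; nia.
by exists x. Qed.

Lemma cardRcl : #|Rcl| = r.
Proof.
have [x0 _] := someP.
rewrite -(deg x0) -(@card_in_imset _ _ (pblock Rcl) [set b | inc x0 b]); last first.
  move=> b b'; rewrite !inE => xb xb' E; exact: (disj xb xb' E).
apply: eq_card => R; apply/idP/imsetP.
  move=> RR; have [b /andP [bR xb]] := block_through x0 RR.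
  by exists b; rewrite ?inE // (def_pblock trR RR bR).
by case=> b _ ->; exact: pbRin.
Qed.

Lemma cardPcl : #|Pcl| = r.
Proof.
have := card_partition HPpart; rewrite cardsT HP (eq_bigr (fun _ => m)) ?sum_nat_const.
  move=> H; apply/eqP; rewrite -(eqn_pmul2r (_ : 0 < m)); [by rewrite H | lia].
by move=> C /HPsize.
Qed.

Lemma cardR R : R \in Rcl -> #|R| = m.
Proof.
move=> RR; have cnt := dcount (fun x b => (b \in R) && inc x b).
rewrite (eq_bigr (fun _ => 1)) in cnt; last by move=> x _; rewrite -(Hres RR x).
rewrite [in RHS](eq_bigr (fun b => if b \in R then r else 0)) in cnt; last first.
  move=> b _; case: (boolP (b \in R)) => H.
    by rewrite -(Hbsize b); apply: eq_card => y; rewrite !inE.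
  by apply: card0_false.
rewrite sum_if sum1_card HP in cnt.
have E : #|[set x in R]| = #|R| by apply: eq_card => b; rewrite inE.
rewrite E in cnt.
have := r_gt1; move: cnt; nia.
Qed.

Definition Dv (u v : (P + B)%type) : nat :=
  match u, v with
  | inl x, inl y => if x == y then 0 else if pblock Pcl x == pblock Pcl y then 4 else 2
  | inl x, inr b => if inc x b then 1 else 3
  | inr b, inl x => if inc x b then 1 else 3
  | inr b, inr b' => if b == b' then 0 else if pblock Rcl b == pblock Rcl b' then 4 else 2
  end.

Local Notation e := (inc_graph inc).

Lemma e_sym u v : e u v = e v u. Proof. by case: u; case: v. Qed.

Lemma Dv_le4 u v : Dv u v <= 4.
Proof. by case: u => ?; case: v => ? /=; do ![case: ifP]. Qed.

Lemma Dv0 u v : (Dv u v == 0) = (v == u).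
Proof.
case: u => [x|b]; case: v => [y|b'] /=; do ?[by case: ifP].
  case: (eqVneq x y) => [->|ne]; rewrite ?eqxx //.
  have -> : (inl y == inl x :> P + B) = false by apply/negbTE; rewrite /= eq_sym.
  by case: ifP.
case: (eqVneq b b') => [->|ne]; rewrite ?eqxx //.
have -> : (inr b' == inr b :> P + B) = false by apply/negbTE; rewrite /= eq_sym.
by case: ifP.
Qed.

Lemma Dv_H1 u y z : e z y -> Dv u y <= (Dv u z).+1.
Proof.
case: u => [x|b0]; case: y => [y|b]; case: z => [z|b'] //= H.
- case Ex: (inc x b'); last by do ![case: ifP].
  case: eqP => // ne; case: ifP => // /eqP E; exfalso; apply: ne; exact: one_per_class Ex H E.
- case: eqP => [E|_]; [by rewrite E H | by do ![case: ifP]].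
- case: eqP => [E|_]; [by rewrite E H | by do ![case: ifP]].
- case Ez: (inc z b0); last by do ![case: ifP].
  case: eqP => // ne; case: ifP => // /eqP E; exfalso; apply: ne; exact: disj Ez H E.
Qed.

Lemma someR : exists R, R \in Rcl.
Proof. by apply: card_pos_ex; rewrite cardRcl; have := r_gt1; lia. Qed.

Lemma Dv_H2 u y : 0 < Dv u y -> exists z, e z y && (Dv u z == (Dv u y).-1).
Proof.
case: u => [x|b0]; case: y => [y|b] /=.
- case: eqP => // ne; case: ifP => E _.
    have [R RR] := someR; have [b /andP [_ yb]] := block_through y RR.
    exists (inr b) => /=; rewrite yb; case xb: (inc x b) => //.
    by exfalso; apply: ne; exact: one_per_class xb yb (eqP E).
  have [b /andP [xb yb]] := common_block (negbT E).
  by exists (inr b) => /=; rewrite yb xb.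
- case xb: (inc x b) => _.
    by exists (inl x) => /=; rewrite xb eqxx.
  have [z] : exists z, z \in [set y | inc y b && (pblock Pcl y != pblock Pcl x)].
    by apply: card_pos_ex; rewrite others; have := r_gt1; lia.
  rewrite inE => /andP [zb H]; exists (inl z) => /=; rewrite zb.
  case: (eqVneq x z) => [E|_]; first by rewrite E eqxx in H.
  by rewrite [pblock Pcl x == _]eq_sym (negbTE H).
- case xb0: (inc y b0) => _.
    by exists (inr b0) => /=; rewrite xb0 eqxx.
  have [R] : exists R, R \in Rcl :\ pblock Rcl b0.
    apply: card_pos_ex; have := cardsD1 (pblock Rcl b0) Rcl; rewrite pbRin cardRcl /=.
    move=> H; have := r_gt1; rewrite H /= add1n ltnS; exact.
  rewrite !inE => /andP [Rne RR].
  have [b /andP [bR yb]] := block_through y RR.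
  have Eb := def_pblock trR RR bR.
  exists (inr b) => /=; rewrite yb /=.
  case: (eqVneq b0 b) => [E|_]; first by rewrite E Eb eqxx in Rne.
  by rewrite Eb [pblock Rcl b0 == _]eq_sym (negbTE Rne).
- case: eqP => // ne; case: ifP => E _.
    have [x xb] := pt_in_block b.
    exists (inl x) => /=; rewrite xb; case xb0: (inc x b0) => //.
    by exfalso; apply: ne; exact: disj xb0 xb (eqP E).
  have [x /andP [xb0 xb]] := common_point (negbT E).
  by exists (inl x) => /=; rewrite xb xb0.
Qed.

Lemma Dv_par u y z : e y z -> Dv u z != Dv u y.
Proof.
by case: u => [x|b0]; case: y => [y|b]; case: z => [z|b'] //= _; do ![case: ifP].
Qed.

Lemma nb_cases u y z : e y z -> 0 < Dv u y ->
  (Dv u z == (Dv u y).+1) || (Dv u z == (Dv u y).-1).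
Proof.
move=> eyz pos; have h1 := Dv_H1 u eyz; have h2 := Dv_H1 u (ltac:(by rewrite e_sym) : e z y).
have h3 := Dv_par u eyz; move: h1 h2 h3 pos; lia.
Qed.

Lemma nb0 u y z : e y z -> Dv u y = 0 -> Dv u z = 1.
Proof.
move=> eyz D0; have h1 := Dv_H1 u eyz.
have h3 := Dv_par u eyz; move: h1 h3 D0; lia.
Qed.


Lemma degV y : #|[set z | e y z]| = r.
Proof.
rewrite card_sumset; case: y => [x|b] /=.
  by rewrite card0_false // add0n deg.
by rewrite (card0_false (p := fun _ => false)) // addn0 Hbsize.
Qed.

Definition cfun n := match n with 1 => 1 | 2 => lam | 3 => r - 1 | 4 => r | _ => 0 end.
Definition bfun n := if n == 0 then r else r - cfun n.

Lemma Dpt2 x z : (Dv (inl x) (inl z) == 2) = (pblock Pcl z != pblock Pcl x).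
Proof.
rewrite /=; case: (eqVneq x z) => [->|_]; first by rewrite eqxx.
by rewrite [pblock Pcl z == _]eq_sym; case: ifP.
Qed.

Lemma Dbl2 b0 b : (Dv (inr b0) (inr b) == 2) = (pblock Rcl b != pblock Rcl b0).
Proof.
rewrite /=; case: (eqVneq b0 b) => [->|_]; first by rewrite eqxx.
by rewrite [pblock Rcl b == _]eq_sym; case: ifP.
Qed.

Lemma cval u y : 0 < Dv u y ->
  #|[set z | e y z & Dv u z == (Dv u y).-1]| = cfun (Dv u y).
Proof.
case: u => [x|b0]; case: y => [y|b].
- rewrite /=; case: eqP => // ne; case: ifP => E _ /=; rewrite card_sumset /=.
    rewrite card0_false // add0n -(deg y); apply: eq_card => b; rewrite !inE.
    case yb: (inc y b) => //=; case xb: (inc x b) => //.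
    by exfalso; apply: ne; exact: one_per_class xb yb (eqP E).
  rewrite card0_false // add0n -(@Hlamb x y); last by rewrite E.
  by apply: eq_card => b; rewrite !inE; case: (inc x b); rewrite ?andbT ?andbF.
- rewrite /=; case xb: (inc x b) => _ /=; rewrite card_sumset /=.
    rewrite (card0_false (p := fun _ => false)) // addn0.
    rewrite -[RHS](cards1 x); apply: eq_card => z; rewrite !inE.
    case: (eqVneq z x) => [->|ne]; first by rewrite xb eqxx.
    by case: ifP; case: (inc z b).
  rewrite (card0_false (p := fun _ => false)) // addn0 -(others x b).
  by apply: eq_card => z; rewrite !inE Dpt2.
- rewrite /=; case xb0: (inc y b0) => _ /=; rewrite card_sumset /=.
    rewrite card0_false // add0n -[RHS](cards1 b0); apply: eq_card => b; rewrite !inE.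
    case: (eqVneq b b0) => [->|ne]; first by rewrite xb0 eqxx.
    by case: ifP; case: (inc y b).
  rewrite card0_false // add0n.
  have := card_split (fun b => inc y b) (fun b => pblock Rcl b == pblock Rcl b0).
  rewrite deg.
  have -> : #|[set z | inc y z && (pblock Rcl z == pblock Rcl b0)]| = 1.
    rewrite -(Hres (pbRin b0) y); apply: eq_card => z; by rewrite !inE eq_sym eqRb andbC.
  move=> H.
  have -> : #|[set z | inc y z && (Dv (inr b0) (inr z) == 2)]| =
            #|[set z | inc y z && ~~ (pblock Rcl z == pblock Rcl b0)]|.
    by apply: eq_card => z; rewrite !inE Dbl2.
  rewrite /cfun; lia.
- rewrite /=; case: eqP => // ne; case: ifP => E _ /=; rewrite card_sumset /=.
    rewrite (card0_false (p := fun _ => false)) // addn0 -(Hbsize b).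
    apply: eq_card => x; rewrite !inE.
    case xb: (inc x b) => //=; case xb0: (inc x b0) => //.
    by exfalso; apply: ne; exact: disj xb0 xb (eqP E).
  rewrite (card0_false (p := fun _ => false)) // addn0 -(@Hdual b0 b); last by rewrite E.
  by apply: eq_card => x; rewrite !inE; case: (inc x b0); rewrite ?andbT ?andbF.
Qed.

Lemma bval u y : #|[set z | e y z & Dv u z == (Dv u y).+1]| = bfun (Dv u y).
Proof.
case: (posnP (Dv u y)) => [D0|pos].
  rewrite D0 /bfun /= -(degV y); apply: eq_card => z; rewrite !inE.
  case eyz: (e y z) => //=; by rewrite (nb0 eyz D0).
have := card_split (fun z => e y z) (fun z => Dv u z == (Dv u y).+1).
rewrite degV.
have -> : #|[set z | e y z && ~~ (Dv u z == (Dv u y).+1)]| = cfun (Dv u y).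
  rewrite -(cval pos); apply: eq_card => z; rewrite !inE.
  case eyz: (e y z) => //=; have := nb_cases eyz pos.
  case: (eqVneq (Dv u z) (Dv u y).+1) => [->|_] /=; last by move=> ->.
  move=> _; apply/esym/eqP; lia.
rewrite /bfun; case: eqP => [E|_]; first by rewrite E in pos.
lia.
Qed.

Lemma aval u y : #|[set z | e y z & Dv u z == Dv u y]| = 0.
Proof. apply: card0_false => z; case eyz: (e y z) => //=; exact: negbTE (Dv_par u eyz). Qed.

Lemma cardV_gt4 : 4 < #|{: P + B}|.
Proof.
rewrite card_sum HP; have [b _] : exists b : B, true.
  by have [x _] := someP; have [R RR] := someR; have [b _] := block_through x RR; exists b.
have : 0 < #|B| by apply/card_gt0P; exists b.
have := r_gt1; nia.
Qed.

Lemma distE u v : dist e u v = Dv u v.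
Proof.
apply: dist_D.
- by move=> y; rewrite Dv0.
- move=> y z; exact: Dv_H1.
- exact: Dv_H2.
- exact: leq_ltn_trans (Dv_le4 u v) cardV_gt4.
Qed.

Lemma conn : connected e.
Proof.
move=> u v; apply: (connect_D (D := Dv u)).
- by move=> y; rewrite Dv0.
- move=> y z; exact: Dv_H1.
- exact: Dv_H2.
Qed.

Lemma distreg : distance_regular e.
Proof.
split; first exact: conn.
exists bfun, (fun _ => 0), cfun => u v; rewrite !distE; split.
- by rewrite -(bval u v); apply: eq_card => z; rewrite !inE distE.
- by rewrite -(aval u v); apply: eq_card => z; rewrite !inE distE.
- by move=> pos; rewrite -(cval pos); apply: eq_card => z; rewrite !inE distE.
Qed.


Definition key (u : (P + B)%type) : ({set P} + {set B})%type :=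
  match u with inl x => inl (pblock Pcl x) | inr b => inr (pblock Rcl b) end.
Definition side (u : (P + B)%type) : bool := if u is inl _ then true else false.

Lemma inl_eq (T U : eqType) (a b : T) : (inl a == inl b :> (T + U)%type) = (a == b). Proof. by []. Qed.
Lemma inr_eq (T U : eqType) (a b : U) : (inr a == inr b :> (T + U)%type) = (a == b). Proof. by []. Qed.
Lemma inlr_eq (T U : eqType) (a : T) (b : U) : (inl a == inr b :> (T + U)%type) = false. Proof. by []. Qed.
Lemma inrl_eq (T U : eqType) (a : T) (b : U) : (inr b == inl a :> (T + U)%type) = false. Proof. by []. Qed.

Lemma arelE u v : antipodal_rel e 4 u v = (key u == key v).
Proof.
rewrite /antipodal_rel distE; case: u => [x|b]; case: v => [y|b'] /=;
  rewrite ?inl_eq ?inr_eq ?inlr_eq ?inrl_eq.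
- by case: (eqVneq x y) => [->|ne]; rewrite ?eqxx //=; case: ifP.
- by case: ifP.
- by case: ifP.
- by case: (eqVneq b b') => [->|ne]; rewrite ?eqxx //=; case: ifP.
Qed.

Lemma ablockE v : antipodal_block e 4 v = [set w | key v == key w].
Proof. by apply/setP => w; rewrite !inE arelE. Qed.

Lemma ablock_card v : #|antipodal_block e 4 v| = m.
Proof.
rewrite ablockE card_sumset; case: v => [x|b] /=.
  rewrite (card0_false (p := fun y => inl (pblock Pcl x) == inr (pblock Rcl y))) // addn0.
  rewrite -(HPsize (pbPin x)); apply: eq_card => y; by rewrite inE inl_eq eqPb.
rewrite (card0_false (p := fun y => inr (pblock Rcl b) == inl (pblock Pcl y))) // add0n.
rewrite -(cardR (pbRin b)); apply: eq_card => y; by rewrite inE inr_eq eqRb.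
Qed.

Lemma diam : has_diameter e 4.
Proof.
split; [exact: conn | by move=> u v; rewrite distE Dv_le4 | ].
have [x0 _] := someP.
have [y] : exists y, y \in pblock Pcl x0 :\ x0.
  apply: card_pos_ex; have := cardsD1 x0 (pblock Pcl x0); rewrite memPb HPsize ?pbPin //= => H.
  by move: Hm; rewrite H add1n ltnS.
rewrite !inE => /andP [ne yin]; exists (inl x0), (inl y).
by rewrite distE /= [x0 == y]eq_sym (negbTE ne) eqPb yin.
Qed.

Lemma antip : antipodal e 4.
Proof.
split; first exact: diam.
move=> u v w; rewrite !arelE eqxx; split=> // /eqP ->; done.
Qed.

Lemma quot_adjE v v' :
  quot_adj e (antipodal_block e 4 v) (antipodal_block e 4 v') = (side v != side v').
Proof.
rewrite /quot_adj !ablockE.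
have same : side v = side v' ->
   [exists w in [set w | key v == key w], exists w' in [set w | key v' == key w], e w w'] = false.
  move=> Es; apply/negbTE/existsP => [[w /andP [wi /existsP [w' /andP [w'i ew]]]]].
  rewrite !inE in wi w'i.
  move: Es wi w'i ew; case: v => ?; case: v' => ?; case: w => ?; case: w' => ? //=;
    by rewrite ?inl_eq ?inr_eq ?inlr_eq ?inrl_eq.
case: v same => [x|b]; case: v' => [x'|b'] /= same; try by rewrite same ?andbF.
- apply/andP; split.
    apply/eqP => /setP /(_ (inl x)); by rewrite !inE eqxx /= inrl_eq.
  have [b0 /andP [b0in xb0]] := block_through x (pbRin b').
  apply/existsP; exists (inl x); rewrite !inE eqxx /=; apply/existsP; exists (inr b0).
  by rewrite !inE /= xb0 andbT inr_eq (def_pblock trR (pbRin b') b0in) eqxx.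
- apply/andP; split.
    apply/eqP => /setP /(_ (inr b)); by rewrite !inE eqxx /= inlr_eq.
  have [b0 /andP [b0in xb0]] := block_through x' (pbRin b).
  apply/existsP; exists (inr b0); rewrite !inE /= inr_eq (def_pblock trR (pbRin b) b0in) eqxx /=.
  apply/existsP; exists (inl x'); by rewrite !inE eqxx /= xb0.
Qed.

Lemma covq : is_cover_of_quotient e 4.
Proof.
move=> C D /imsetP [v _ ->] /imsetP [v' _ ->]; rewrite quot_adjE => Hs w.
rewrite !ablockE inE => /eqP Kw; rewrite card_sumset.
move: Hs Kw; case: v => [x|b]; case: v' => [x'|b']; case: w => [xw|bw] //= _ _.
- rewrite card0_false ?add0n; last by move=> y; rewrite andbF.
  rewrite -(Hres (pbRin b') xw); apply: eq_card => b0; by rewrite !inE inr_eq eqRb.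
- rewrite (card0_false (p := fun y => (inr y \in [set w | key (inl x') == key w]) && false)) ?addn0;
    last by move=> y; rewrite andbF.
  rewrite -(Hmeet bw (pbPin x')); apply: eq_card => y; by rewrite !inE inl_eq eqPb.
Qed.

Lemma qiso : quotient_iso_Krr e 4 r.
Proof.
have r0 : 0 < r by have := r_gt1; lia.
have [fP [fPi fPs]] := bij_ord r0 cardPcl.
have [fR [fRi fRs]] := bij_ord r0 cardRcl.
pose G (k : ({set P} + {set B})%type) : ('I_r + 'I_r)%type :=
  match k with inl C => inl (fP C) | inr R => inr (fR R) end.
pose i0 : 'I_r := Ordinal r0.
pose f (C : {set (P + B)}) := if [pick w in C] is Some w then G (key w) else inl i0.
have fE v : f (antipodal_block e 4 v) = G (key v).
  rewrite /f; case: pickP => [w|]; first by rewrite ablockE inE => /eqP ->.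
  by move/(_ v); rewrite ablockE inE eqxx.
exists f; split.
- move=> C D /imsetP [v _ ->] /imsetP [v' _ ->]; rewrite !fE !ablockE.
  case: v => [x|b]; case: v' => [x'|b'] //= [E].
    by rewrite (fPi _ _ (pbPin x) (pbPin x') E).
  by rewrite (fRi _ _ (pbRin b) (pbRin b') E).
- case=> i.
    have [C CP <-] := fPs i.
    have [x xC] : exists x, x \in C by apply: card_pos_ex; rewrite HPsize //; lia.
    exists (antipodal_block e 4 (inl x)); first by apply: imset_f.
    by rewrite fE /= (def_pblock trP CP xC).
  have [R RR <-] := fRs i.
  have [b bR] : exists b, b \in R by apply: card_pos_ex; rewrite cardR //; lia.
  exists (antipodal_block e 4 (inr b)); first by apply: imset_f.
  by rewrite fE /= (def_pblock trR RR bR).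
- move=> C D /imsetP [v _ ->] /imsetP [v' _ ->]; rewrite !fE quot_adjE.
  by case: v; case: v'.
Qed.

Lemma bip : bipartite e.
Proof. by exists side => u v; case: u; case: v. Qed.

Lemma main_res :
  [/\ distance_regular e, bipartite e, antipodal_cover_of_Krr e 4 r, has_diameter e 4
    & forall v, #|antipodal_block e 4 v| = m].
Proof.
split; [exact: distreg | exact: bip | split; [exact: antip | exact: covq | exact: qiso]
       | exact: diam | exact: ablock_card].
Qed.

End Main.

Theorem lemma2p2 (P B : finType) (inc : P -> B -> bool)
    (Pcl : {set {set P}}) (Rcl : {set {set B}}) (r lam m : nat) :
  1 < m -> 0 < lam ->
  r = lam * m ->
  is_RGD inc Pcl Rcl r lam m ->
  (forall b b' : B, pblock Rcl b != pblock Rcl b' ->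
     #|[set x : P | inc x b && inc x b']| = lam) ->
  [/\ distance_regular (inc_graph inc),
      bipartite (inc_graph inc),
      antipodal_cover_of_Krr (inc_graph inc) 4 r,
      has_diameter (inc_graph inc) 4
    & forall v, #|antipodal_block (inc_graph inc) 4 v| = m].
Proof.
move=> Hm Hlam Hr [[HP [HPpart HPsize Hbsize Hmeet Hlamb]] [HRpart Hres]] Hdual.
by apply: main_res; try eassumption.
Qed.
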